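(* Let $H$ be a connected graph, let $r\ge 2$, and let $G=H\circ rK_1$. Then $T\subseteq V(G)$ is a $\operatorname{Z}$-irrelevant set of $G$ if and only if $T\subseteq V(H)$.
   Context: Zero forcing on a graph $G$: starting with a set $S$ of blue vertices (others white), a blue vertex $v$ may change a white vertex $w$ to blue if $w$ is the only white neighbor of $v$; $S$ is a zero forcing set if repeated application colors all of $V(G)$ blue. A vertex $v$ is $\operatorname{Z}$-irrelevant if $v$ belongs to no minimal (under inclusion) zero forcing set of $G$; a set is $\operatorname{Z}$-irrelevant if all its vertices are. $rK_1$ is the graph of $r$ isolated vertices. The corona $H\circ F$ is obtained from $H$ by taking, for each $v\in V(H)$, a disjoint copy $F_v$ of $F$ and joining $v$ to every vertex of $F_v$; thus $H\circ rK_1$ attaches $r$ pendant leaves to each vertex of $H$. *)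

(* Defs.v *)
From mathcomp Require Import all_boot.
Set Implicit Arguments. Unset Strict Implicit. Unset Printing Implicit Defensive.

Definition simple_graph (T : finType) (e : rel T) : Prop :=
  symmetric e /\ irreflexive e.

Definition connected_graph (T : finType) (e : rel T) : Prop :=
  (0 < #|T|) /\ forall u v : T, connect e u v.

Section ZeroForcing.
Variables (T : finType) (e : rel T).

(* One round of the color-change rule applied in parallel: a white vertex w
   turns blue if some blue v has w as its only white neighbour. *)
Definition force_step (S : {set T}) : {set T} :=
  S :|: [set w | [exists v, (v \in S) && e v w &&
                   [forall u, e v u ==> (u \in S) || (u == w)]]].

(* Final coloring: repeated application (#|T| rounds suffice to stabilize). *)
Definition zf_closure (S : {set T}) : {set T} := iter #|T| force_step S.

Definition zero_forcing_set (S : {set T}) : bool := zf_closure S == setT.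

Definition minimal_zf_set (S : {set T}) : bool := minset zero_forcing_set S.

Definition Z_irrelevant_vertex (v : T) : Prop :=
  forall S : {set T}, minimal_zf_set S -> v \notin S.

Definition Z_irrelevant_set (X : {set T}) : Prop :=
  forall v, v \in X -> Z_irrelevant_vertex v.
End ZeroForcing.

(* Corona H o rK_1: vertices inl v (v in V(H)) and inr (v, i) (the i-th
   pendant leaf attached to v). *)
Definition corona_vertex (V : finType) (r : nat) : finType :=
  (V + (V * 'I_r))%type.

Arguments corona_vertex : clear implicits.
Definition corona_rK1 (V : finType) (e : rel V) (r : nat)
  : rel (corona_vertex V r) :=
  fun x y =>
    match x, y with
    | inl u, inl v => e u v
    | inl u, inr (v, _) => u == v
    | inr (u, _), inl v => u == v
    | inr _, inr _ => false
    end.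

Definition base_vertices (V : finType) (r : nat) : {set corona_vertex V r} :=
  [set x | if x is inl _ then true else false].
Arguments corona_rK1 {V} e r.
Arguments Z_irrelevant_set {T} e X.

(* Main.v *)
Require Import Defs.
From mathcomp Require Import all_boot.
Set Implicit Arguments. Unset Strict Implicit.

Section Gen.
Variables (T : finType) (e : rel T).
Local Notation fs := (force_step e).

Lemma fs_ext (X : {set T}) : X \subset fs X.
Proof. exact: subsetUl. Qed.

Lemma fs_mono (X Y : {set T}) : X \subset Y -> fs X \subset fs Y.
Proof.
move=> sXY; apply/subsetP => w; rewrite !inE => /orP[wX|].
  by rewrite (subsetP sXY w wX).
case/existsP=> v /andP[/andP[vX evw] /forallP H]; apply/orP; right.
apply/existsP; exists v; rewrite (subsetP sXY v vX) evw /=.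
apply/forallP=> u; apply/implyP=> evu; move/implyP: (H u) => /(_ evu)/orP[uX|->].
  by rewrite (subsetP sXY u uX).
by rewrite orbT.
Qed.

Lemma fs_force (X : {set T}) v w : v \in X -> e v w ->
  (forall u, e v u -> (u \in X) || (u == w)) -> w \in fs X.
Proof.
move=> vX evw H; rewrite /force_step in_setU; apply/orP; right; rewrite inE.
apply/existsP; exists v; rewrite vX evw /=; apply/forallP => u; apply/implyP; exact: H.
Qed.

Lemma iter_mono k (X Y : {set T}) : X \subset Y -> iter k fs X \subset iter k fs Y.
Proof. by elim: k => //= k IH /IH; apply: fs_mono. Qed.

Lemma iter_ext k (X : {set T}) : X \subset iter k fs X.
Proof. elim: k => //= k IH; exact: subset_trans IH (fs_ext _). Qed.

Lemma iter_fix (X : {set T}) : fs (iter #|T| fs X) = iter #|T| fs X.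
Proof.
suff: forall k, (k <= #|iter k fs X|) || (fs (iter k fs X) == iter k fs X).
  move/(_ #|T|)/orP=> [H|/eqP//].
  have ->: iter #|T| fs X = setT.
    by apply/eqP; rewrite eqEcard subsetT cardsT.
  by apply/eqP; rewrite eqEsubset subsetT fs_ext.
elim=> [|k IH] //=.
have [E|NE] := eqVneq (fs (iter k fs X)) (iter k fs X).
  by rewrite !E eqxx orbT.
move: IH; rewrite (negbTE NE) orbF => IH.
have: iter k fs X \proper fs (iter k fs X).
  by rewrite properEneq eq_sym NE fs_ext.
by move/proper_card => H; rewrite (leq_ltn_trans IH H).
Qed.

Lemma iter_le_closure k (X : {set T}) : iter k fs X \subset zf_closure e X.
Proof.
rewrite /zf_closure.
have fixk : forall j, iter j fs (iter #|T| fs X) = iter #|T| fs X.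
  by elim=> //= j ->; rewrite iter_fix.
apply: subset_trans (iter_ext #|T| (iter k fs X)) _.
by rewrite -iterD addnC iterD fixk.
Qed.

Lemma closure_mono (X Y : {set T}) : X \subset Y -> zf_closure e X \subset zf_closure e Y.
Proof. by move=> /(iter_mono #|T|). Qed.

End Gen.

Section Cor.
Variables (V : finType) (e : rel V) (r : nat).
Local Notation CV := (corona_vertex V r).
Local Notation G := (corona_rK1 e r).
Local Notation fs := (force_step G).

Lemma leaf_step (X : {set CV}) u (i j : 'I_r) : i != j ->
  (inr (u, i) : CV) \notin X -> (inr (u, j) : CV) \notin X ->
  (inr (u, i) : CV) \notin fs X.
Proof.
move=> ij ni nj; rewrite !inE negb_or ni /=; apply/existsP => -[v].
case/andP=> /andP[vX].
case: v vX => [u'|[u' i']] //= vX /eqP equ; subst u'.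
move/forallP/(_ (inr (u, j)))/implyP; rewrite /= eqxx => /(_ isT).
by rewrite (negbTE nj) /= -[_ == _]/((u, j) == (u, i)) xpair_eqE eqxx /= eq_sym (negbTE ij).
Qed.

Lemma leaves_bound (S : {set CV}) u (i j : 'I_r) : zero_forcing_set G S ->
  i != j -> (inr (u, i) : CV) \in S \/ (inr (u, j) : CV) \in S.
Proof.
move=> zS ij; case: (boolP ((inr (u, i) : CV) \in S)) => [|ni]; first by left.
case: (boolP ((inr (u, j) : CV) \in S)) => [|nj]; first by right.
exfalso.
have: forall k, ((inr (u, i) : CV) \notin iter k fs S) && ((inr (u, j) : CV) \notin iter k fs S).
  elim=> [|k /andP[IHi IHj]] /=; first by rewrite ni nj.
  by rewrite (leaf_step ij IHi IHj) (leaf_step _ IHj IHi) // eq_sym.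
move/(_ #|CV|)/andP=> [+ _]; move/eqP: zS; rewrite /zf_closure => ->.
by rewrite inE.
Qed.
End Cor.
Unset Implicit Arguments. Set Strict Implicit.

Theorem proposition2p20 (V : finType) (e : rel V) (r : nat) :
  simple_graph e -> connected_graph e -> 2 <= r ->
  forall T : {set corona_vertex V r},
    Z_irrelevant_set (corona_rK1 e r) T <-> T \subset base_vertices V r.
Proof.
move=> _ _ r2 T.
have r0 : 0 < r by apply: leq_trans r2.
pose j0 : 'I_r := Ordinal r0.
pose j1 : 'I_r := Ordinal r2.
have j01 : j0 != j1 by [].
split.
- move=> HT; apply/subsetP => x xT; rewrite inE.
  case: x xT => [//|[u0 i0]] xT; exfalso.
  pose excl (u : V) : 'I_r := if (u == u0) && (i0 == j0) then j1 else j0.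
  pose oth (u : V) : 'I_r := if excl u == j0 then j1 else j0.
  have othN : forall u, oth u != excl u.
    by move=> u; rewrite /oth; case: (eqVneq (excl u) j0) => [->|N] //; rewrite eq_sym.
  pose S : {set corona_vertex V r} :=
    [set x | if x is inr p then p.2 != excl p.1 else false].
  have baseS : forall u, (inl u : corona_vertex V r) \in force_step (corona_rK1 e r) S.
    move=> u; rewrite !inE /=; apply/existsP; exists (inr (u, oth u)).
    rewrite inE /= othN /= eqxx /=; apply/forallP => -[w|[w k]] //=.
    by apply/implyP => /eqP ->; rewrite eqxx orbT.
  have zS : zero_forcing_set (corona_rK1 e r) S.
    rewrite /zero_forcing_set eqEsubset subsetT /=.
    apply: subset_trans (iter_le_closure _ 2 S).
    apply/subsetP => -[u|[u i]] _ /=.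
      by apply: (subsetP (fs_ext _ _)); apply: baseS.
    have [iE|iN] := eqVneq i (excl u); last first.
      by do 2 apply: (subsetP (fs_ext _ _)); rewrite inE /= iN.
    apply: (fs_force (v := inl u)); rewrite ?baseS /= ?eqxx //.
    move=> -[w|[w k]] /=; first by rewrite baseS.
    move=> /eqP <-.
    have [kE|kN] := eqVneq k (excl u).
      by rewrite -[_ == _]/((u, k) == (u, i)) kE iE eqxx orbT.
    by rewrite (subsetP (fs_ext _ _)) // inE /= kN.
  have mS : minimal_zf_set (corona_rK1 e r) S.
    apply/minsetP; split => // B zB sBS; apply/eqP; rewrite eqEsubset sBS /=.
    apply/subsetP => -[u|[u i]]; rewrite inE //= => iN.
    case: (leaves_bound u zB iN) => // /(subsetP sBS).
    by rewrite inE /= eqxx.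
  move: (HT _ xT S mS); rewrite inE /= /excl negbK.
  rewrite eqxx /=; case: (eqVneq i0 j0) => [->|N] /=; [by [] | by rewrite (negbTE N)].
- move=> sTb x xT S mS; apply/negP => xS.
  move: (subsetP sTb x xT); rewrite inE; case: x xT xS => [v|//] xT xS _.
  case/minsetP: mS => zS minS.
  have [j jS] : exists j, (inr (v, j) : corona_vertex V r) \in S.
    by case: (leaves_bound v zS j01) => H; [exists j0 | exists j1].
  pose S' := S :\ (inl v : corona_vertex V r).
  have sSS' : S \subset force_step (corona_rK1 e r) S'.
    apply/subsetP => y yS.
    have [->|yN] := eqVneq y (inl v); last first.
      by apply: (subsetP (fs_ext _ _)); rewrite !inE yN.
    apply: (fs_force (v := inr (v, j))); rewrite ?inE ?jS /= ?eqxx //.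
    by move=> -[w|//] /= /eqP ->; rewrite eqxx orbT.
  have zS' : zero_forcing_set (corona_rK1 e r) S'.
    move: zS; rewrite /zero_forcing_set !eqEsubset !subsetT /= => H.
    apply: subset_trans H _; apply: subset_trans (closure_mono _ sSS') _.
    rewrite /zf_closure -iterSr; exact: iter_le_closure.
  have := minS S' zS' (subsetDl _ _).
  move=> E; move: xS; rewrite -E !inE eqxx.
  by [].
Qed.
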